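(* Every sublattice $L$ of $A_2$ of rank $2$ is reflection invariant.
   Context: Let $H_0=\{x\in\mathbb R^{3}:x_0+x_1+x_2=0\}$ and $A_2=H_0\cap\mathbb Z^3$. For $p,q\in H_0$ let $d_\triangle(p,q)=\max_i(p_i-q_i)$, and for $x\in H_0$ let $h_{\triangle,L}(x)=\min_{p\in L}d_\triangle(x,p)$. $\mathrm{Crit}(L)$ denotes the set of points of $H_0$ that are local maxima of $h_{\triangle,L}$ on $H_0$. $L$ is reflection invariant if there exists $t\in\mathbb R^{3}$ with $-\mathrm{Crit}(L)=\mathrm{Crit}(L)+t$. *)

(* Defs.v *)
From Stdlib Require Import Reals ZArith.
Open Scope R_scope.

Definition pt := (R * R * R)%type.
Definition c0 (x : pt) : R := fst (fst x).
Definition c1 (x : pt) : R := snd (fst x).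
Definition c2 (x : pt) : R := snd x.

Definition zpt := (Z * Z * Z)%type.
Definition zc0 (p : zpt) : Z := fst (fst p).
Definition zc1 (p : zpt) : Z := snd (fst p).
Definition zc2 (p : zpt) : Z := snd p.
Definition zpt_to_pt (p : zpt) : pt := (IZR (zc0 p), IZR (zc1 p), IZR (zc2 p)).

Definition inH0 (x : pt) : Prop := c0 x + c1 x + c2 x = 0.

Definition inA2 (p : zpt) : Prop := (zc0 p + zc1 p + zc2 p = 0)%Z.

Definition zadd (p q : zpt) : zpt := (zc0 p + zc0 q, zc1 p + zc1 q, zc2 p + zc2 q)%Z.
Definition zopp (p : zpt) : zpt := (- zc0 p, - zc1 p, - zc2 p)%Z.
Definition zscale (a : Z) (p : zpt) : zpt := (a * zc0 p, a * zc1 p, a * zc2 p)%Z.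
Definition zzero : zpt := (0, 0, 0)%Z.

Definition is_sublattice_A2 (L : zpt -> Prop) : Prop :=
  (forall p, L p -> inA2 p) /\
  L zzero /\
  (forall p q, L p -> L q -> L (zadd p q)) /\
  (forall p, L p -> L (zopp p)).

(* L has rank 2: it contains two linearly independent vectors
   (rank of a subgroup of A_2 ≅ Z^2 is at most 2). *)
Definition has_rank2 (L : zpt -> Prop) : Prop :=
  exists u v, L u /\ L v /\
    forall a b : Z, zadd (zscale a u) (zscale b v) = zzero -> a = 0%Z /\ b = 0%Z.

Definition d_tri (p q : pt) : R :=
  Rmax (c0 p - c0 q) (Rmax (c1 p - c1 q) (c2 p - c2 q)).

(* is_hval L x v  <->  v = h_{triangle,L}(x) = min_{p in L} d_triangle(x, p)
   (the minimum is attained, L being a discrete set). *)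
Definition is_hval (L : zpt -> Prop) (x : pt) (v : R) : Prop :=
  (exists p, L p /\ d_tri x (zpt_to_pt p) = v) /\
  (forall p, L p -> v <= d_tri x (zpt_to_pt p)).

Definition inCrit (L : zpt -> Prop) (x : pt) : Prop :=
  inH0 x /\
  exists vx, is_hval L x vx /\
  exists eps, eps > 0 /\
    forall y, inH0 y ->
      Rabs (c0 y - c0 x) < eps -> Rabs (c1 y - c1 x) < eps -> Rabs (c2 y - c2 x) < eps ->
      forall vy, is_hval L y vy -> vy <= vx.

Definition popp (x : pt) : pt := (- c0 x, - c1 x, - c2 x).
Definition padd (x y : pt) : pt := (c0 x + c0 y, c1 x + c1 y, c2 x + c2 y).
Definition psub (x y : pt) : pt := (c0 x - c0 y, c1 x - c1 y, c2 x - c2 y).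

Definition reflection_invariant (L : zpt -> Prop) : Prop :=
  exists t : pt, forall x : pt,
    inCrit L (popp x) <-> inCrit L (psub x t).

(* Main.v *)
Require Import Defs.
From Stdlib Require Import Reals ZArith Lia Psatz Classical Lra.
Import Defs.

Inductive idx := I0 | I1 | I2.

Definition zc (i : idx) (p : zpt) : Z :=
  match i with I0 => zc0 p | I1 => zc1 p | I2 => zc2 p end.

Definition nxt (i : idx) : idx := match i with I0 => I1 | I1 => I2 | I2 => I0 end.

Lemma idx_eq_dec : forall i j : idx, {i = j} + {i <> j}.
Proof. decide equality. Defined.

Lemma zpt_ext : forall p q : zpt, (forall i, zc i p = zc i q) -> p = q.
Proof.
  intros [[p0 p1] p2] [[q0 q1] q2] H.
  pose proof (H I0) as H0; pose proof (H I1) as H1; pose proof (H I2) as H2.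
  simpl in *; unfold zc0, zc1, zc2 in *; simpl in *; subst; reflexivity.
Qed.

Lemma zc_add : forall i p q, zc i (zadd p q) = (zc i p + zc i q)%Z.
Proof. intros [] [[? ?] ?] [[? ?] ?]; reflexivity. Qed.
Lemma zc_opp : forall i p, zc i (zopp p) = (- zc i p)%Z.
Proof. intros [] [[? ?] ?]; reflexivity. Qed.
Lemma zc_scale : forall i a p, zc i (zscale a p) = (a * zc i p)%Z.
Proof. intros [] ? [[? ?] ?]; reflexivity. Qed.
Lemma zc_zero : forall i, zc i zzero = 0%Z.
Proof. intros []; reflexivity. Qed.

Definition zsub p q := zadd p (zopp q).
Lemma zc_sub : forall i p q, zc i (zsub p q) = (zc i p - zc i q)%Z.
Proof. intros; unfold zsub; rewrite zc_add, zc_opp; lia. Qed.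

Lemma sum_idx : forall p, inA2 p -> (zc I0 p + zc I1 p + zc I2 p = 0)%Z.
Proof. intros p H; exact H. Qed.

Lemma idx_cover3 : forall i j k : idx, i <> j -> j <> k -> i <> k ->
  forall m, m = i \/ m = j \/ m = k.
Proof. intros [] [] [] H1 H2 H3 []; try tauto; try congruence. Qed.

Lemma sum3 : forall p (i j k : idx), inA2 p -> i <> j -> j <> k -> i <> k ->
  (zc i p + zc j p + zc k p = 0)%Z.
Proof.
  intros p [] [] [] H H1 H2 H3; unfold inA2 in H; simpl;
  try congruence; lia.
Qed.

Section Lat.
Variable L : zpt -> Prop.
Hypothesis HL : is_sublattice_A2 L.

Lemma L_A2 : forall p, L p -> inA2 p. Proof. apply HL. Qed.
Lemma L_add : forall p q, L p -> L q -> L (zadd p q). Proof. apply HL. Qed.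
Lemma L_opp : forall p, L p -> L (zopp p). Proof. apply HL. Qed.
Lemma L_zero : L zzero. Proof. apply HL. Qed.
Lemma L_sub : forall p q, L p -> L q -> L (zsub p q).
Proof. intros; apply L_add; auto; apply L_opp; auto. Qed.

Definition cand (a : zpt) (j : idx) (p : zpt) : Prop :=
  L p /\ zc j p = zc j a /\ forall k, k <> j -> (zc k p > zc k a)%Z.
Definition emptyT (a : zpt) : Prop :=
  forall q, L q -> exists i, (zc i q <= zc i a)%Z.
Definition canon (a : zpt) (j : idx) (p : zpt) : Prop :=
  cand a j p /\ forall p', cand a j p' -> (zc (nxt j) p <= zc (nxt j) p')%Z.

Lemma cand_ge : forall a j p, cand a j p -> forall k, (zc k p >= zc k a)%Z.
Proof.
  intros a j p [_ [H1 H2]] k. destruct (idx_eq_dec k j).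
  - subst; lia.
  - specialize (H2 k n); lia.
Qed.


Definition lin (psi z : zpt) : Z :=
  (zc I0 psi * zc I0 z + zc I1 psi * zc I1 z + zc I2 psi * zc I2 z)%Z.
Definition mkz (f : idx -> Z) : zpt := (f I0, f I1, f I2).
Lemma zc_mkz : forall f i, zc i (mkz f) = f i.
Proof. intros f []; reflexivity. Qed.
Lemma lin3 : forall psi z (i j k : idx), i <> j -> j <> k -> i <> k ->
  lin psi z = (zc i psi * zc i z + zc j psi * zc j z + zc k psi * zc k z)%Z.
Proof. intros psi z [] [] [] H1 H2 H3; unfold lin; simpl; try congruence; lia. Qed.

Definition nondeg (psi : zpt) : Prop := exists i i', zc i psi <> zc i' psi.

Definition Sep (a b : zpt) (P Q : idx -> zpt) : Prop :=
  exists psi gam, nondeg psi /\ forall m, (lin psi (P m) >= gam)%Z /\ (lin psi (Q m) <= gam)%Z.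

Lemma Sep_sym : forall a b P Q, Sep b a Q P -> Sep a b P Q.
Proof.
  intros a b P Q [psi [g [[i [i' Hn]] H]]].
  exists (zopp psi), (- g)%Z. split.
  - exists i, i'. rewrite !zc_opp. lia.
  - intro m; destruct (H m) as [H1 H2]. unfold lin in *. rewrite !zc_opp. lia.
Qed.

Section P3.
Variables (a b : zpt) (P Q : idx -> zpt).
Hypothesis Ea : emptyT a.
Hypothesis Eb : emptyT b.
Hypothesis HP : forall j, canon a j (P j).
Hypothesis HQ : forall j, canon b j (Q j).

Lemma P_cand : forall j, cand a j (P j). Proof. intro j; apply HP. Qed.
Lemma Q_cand : forall j, cand b j (Q j). Proof. intro j; apply HQ. Qed.

Lemma L1 : (forall i, (zc i a <= zc i b)%Z) -> a = b.
Proof.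
  intro H. apply zpt_ext. intro j.
  destruct (Q_cand j) as [HL1 [Hj Hk]].
  destruct (Ea (Q j) HL1) as [i Hi].
  pose proof (cand_ge _ _ _ (Q_cand j) i) as Hge. pose proof (H i).
  destruct (idx_eq_dec i j).
  - subst. specialize (H j); lia.
  - specialize (Hk i n). lia.
Qed.

Lemma unit_lin : forall j z, lin (mkz (fun i => if idx_eq_dec i j then 1%Z else 0%Z)) z = zc j z.
Proof. intros [] z; unfold lin; rewrite !zc_mkz; repeat destruct idx_eq_dec; try congruence; lia. Qed.

Lemma L2 : forall i1 i2 j, i1 <> i2 -> i2 <> j -> i1 <> j ->
  (zc i1 a < zc i1 b)%Z -> (zc i2 a < zc i2 b)%Z -> (zc j b < zc j a)%Z -> Sep a b P Q.
Proof.
  intros i1 i2 j H12 H2j H1j Hi1 Hi2 Hj.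
  exists (mkz (fun i => if idx_eq_dec i j then 1%Z else 0%Z)), (zc j a).
  split.
  - exists j, i1. rewrite !zc_mkz. destruct (idx_eq_dec j j); [|congruence].
    destruct (idx_eq_dec i1 j); [congruence|]. lia.
  - intro m. rewrite !unit_lin. split.
    + pose proof (cand_ge _ _ _ (P_cand m) j). lia.
    + destruct (Q_cand m) as [HL1 _].
      destruct (Ea (Q m) HL1) as [i Hi].
      pose proof (cand_ge _ _ _ (Q_cand m) i).
      destruct (idx_cover3 i1 i2 j H12 H2j H1j i) as [ -> | [ -> | -> ] ]; lia.
Qed.

Lemma L3core : forall i j k, i <> j -> j <> k -> i <> k -> nxt k = i ->
  (zc i a < zc i b)%Z -> (zc j b < zc j a)%Z -> zc k a = zc k b -> Sep a b P Q.
Proof.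
  intros i j k Hij Hjk Hik Hn Hi Hj Hk.
  assert (Pm_i : forall m, m <> k -> (zc i (P m) <= zc i b)%Z).
  { intros m Hm. destruct (P_cand m) as [HL1 [Hmm Hmo]].
    destruct (Eb (P m) HL1) as [i' Hi'].
    destruct (idx_cover3 i j k Hij Hjk Hik i') as [ -> | [ -> | -> ] ]; auto.
    - destruct (idx_eq_dec m j); [subst; lia|]. specialize (Hmo j (not_eq_sym n)). lia.
    - specialize (Hmo k (not_eq_sym Hm)). lia. }
  assert (Qm_j : forall m, m <> k -> (zc j (Q m) <= zc j a)%Z).
  { intros m Hm. destruct (Q_cand m) as [HL1 [Hmm Hmo]].
    destruct (Ea (Q m) HL1) as [i' Hi'].
    destruct (idx_cover3 i j k Hij Hjk Hik i') as [ -> | [ -> | -> ] ]; auto.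
    - destruct (idx_eq_dec m i); [subst; lia|]. specialize (Hmo i (not_eq_sym n)). lia.
    - specialize (Hmo k (not_eq_sym Hm)). lia. }
  destruct (Z_le_gt_dec (zc i (P k)) (zc i b)) as [Hc|Hc].
  -
    exists (mkz (fun t => if idx_eq_dec t i then (-1)%Z else 0%Z)), (- zc i b)%Z.
    assert (Hl : forall z, lin (mkz (fun t => if idx_eq_dec t i then (-1)%Z else 0%Z)) z = (- zc i z)%Z).
    { intros z; destruct i; unfold lin; rewrite !zc_mkz; repeat destruct idx_eq_dec; try congruence; lia. }
    split.
    + exists i, j. rewrite !zc_mkz. destruct (idx_eq_dec i i); [|congruence].
      destruct (idx_eq_dec j i); [congruence|]. lia.
    + intro m. rewrite !Hl. split.
      * destruct (idx_eq_dec m k); [subst; lia|]. specialize (Pm_i m n). lia.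
      * pose proof (cand_ge _ _ _ (Q_cand m) i). lia.
  -
    assert (CPb : cand b k (P k)).
    { destruct (P_cand k) as [HL1 [Hkk Hko]]. split; [auto|split].
      - lia.
      - intros t Ht. specialize (Hko t Ht).
        destruct (idx_cover3 i j k Hij Hjk Hik t) as [ -> | [ -> | -> ] ]; lia. }
    assert (A1 : (zc i (Q k) <= zc i (P k))%Z).
    { destruct (HQ k) as [_ Hmin]. specialize (Hmin _ CPb). rewrite Hn in Hmin. exact Hmin. }
    assert (LP : L (P k)) by apply (P_cand k).
    assert (LQ : L (Q k)) by apply (Q_cand k).
    pose proof (sum3 _ i j k (L_A2 _ LP) Hij Hjk Hik) as SP.
    pose proof (sum3 _ i j k (L_A2 _ LQ) Hij Hjk Hik) as SQ.
    assert (CQa : cand a k (Q k)).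
    { destruct (Q_cand k) as [HL1 [Hkk Hko]]. split; [auto|split].
      - lia.
      - destruct (P_cand k) as [_ [Pkk Pko]].
        intros t Ht. pose proof (Hko t Ht) as H1.
        destruct (idx_cover3 i j k Hij Hjk Hik t) as [ -> | [ -> | -> ] ].
        + lia.
        + specialize (Pko j Hjk). lia.
        + congruence. }
    assert (A2 : (zc i (P k) <= zc i (Q k))%Z).
    { destruct (HP k) as [_ Hmin]. specialize (Hmin _ CQa). rewrite Hn in Hmin. exact Hmin. }
    assert (Eq : P k = Q k).
    { apply zpt_ext. intro t. destruct (P_cand k) as [_ [Pkk _]]. destruct (Q_cand k) as [_ [Qkk _]].
      destruct (idx_cover3 i j k Hij Hjk Hik t) as [ -> | [ -> | -> ] ]; lia. }
    set (w := P k).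
    set (al := (zc i w - zc i b)%Z). set (be := (zc j w - zc j a)%Z).
    assert (Hal : (al > 0)%Z) by (unfold al, w; lia).
    assert (Hbe : (be > 0)%Z).
    { unfold be, w. destruct (P_cand k) as [_ [_ Pko]]. specialize (Pko j Hjk). lia. }
    exists (mkz (fun t => if idx_eq_dec t j then al else if idx_eq_dec t i then (- be)%Z else 0%Z)),
      (al * zc j a - be * zc i b)%Z.
    assert (Hl : forall z, lin (mkz (fun t => if idx_eq_dec t j then al else if idx_eq_dec t i then (- be)%Z else 0%Z)) z = (al * zc j z - be * zc i z)%Z).
    { intro z. rewrite (lin3 _ z i j k Hij Hjk Hik). rewrite !zc_mkz.
      destruct (idx_eq_dec i j); [congruence|]. destruct (idx_eq_dec i i); [|congruence].
      destruct (idx_eq_dec j j); [|congruence]. destruct (idx_eq_dec k j); [congruence|].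
      destruct (idx_eq_dec k i); [congruence|]. lia. }
    split.
    + exists j, k. rewrite !zc_mkz. destruct (idx_eq_dec j j); [|congruence].
      destruct (idx_eq_dec k j); [congruence|]. destruct (idx_eq_dec k i); [congruence|]. lia.
    + intro m. rewrite !Hl. split.
      * destruct (idx_eq_dec m k).
        -- subst m. fold w. unfold al, be. lia.
        -- pose proof (Pm_i m n). pose proof (cand_ge _ _ _ (P_cand m) j). nia.
      * destruct (idx_eq_dec m k).
        -- subst m. rewrite <- Eq. fold w. unfold al, be. lia.
        -- pose proof (Qm_j m n). pose proof (cand_ge _ _ _ (Q_cand m) i). nia.
Qed.

End P3.

Definition third (i j : idx) : idx :=
  match i, j with
  | I0, I1 | I1, I0 => I2
  | I0, I2 | I2, I0 => I1
  | _, _ => I0 end.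
Lemma third_ok : forall i j, i <> j -> third i j <> i /\ third i j <> j.
Proof. intros [] [] H; simpl; split; congruence. Qed.
Lemma nxt_cases : forall i j k, i <> j -> j <> k -> i <> k -> nxt k = i \/ nxt k = j.
Proof. intros [] [] [] H1 H2 H3; simpl; try congruence; tauto. Qed.

Lemma P3_full : forall a b P Q, emptyT a -> emptyT b ->
  (forall j, canon a j (P j)) -> (forall j, canon b j (Q j)) -> a <> b -> Sep a b P Q.
Proof.
  intros a b P Q Ea Eb HP HQ Hab.
  destruct (classic (forall i, (zc i a <= zc i b)%Z)) as [H1|H1].
  { exfalso; apply Hab; eapply L1; eauto. }
  destruct (classic (forall i, (zc i b <= zc i a)%Z)) as [H2|H2].
  { exfalso; apply Hab; symmetry; eapply L1; eauto. }
  apply not_all_ex_not in H1 as [j Hj]. apply not_all_ex_not in H2 as [i Hi].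
  assert (Hij : i <> j) by (intro; subst; lia).
  destruct (third_ok i j Hij) as [Hki Hkj].
  set (k := third i j) in *.
  destruct (Z.lt_total (zc k a) (zc k b)) as [Hk|[Hk|Hk]].
  - eapply (L2 a b P Q Ea HP HQ i k j); try congruence; lia.
  - destruct (nxt_cases i j k Hij (not_eq_sym Hkj) (not_eq_sym Hki)) as [Hn|Hn].
    + eapply (L3core a b P Q Ea Eb HP HQ i j k); try congruence; lia.
    + apply Sep_sym. eapply (L3core b a Q P Eb Ea HQ HP j i k); try congruence; lia.
  - apply Sep_sym. eapply (L2 b a Q P Eb HQ HP j k i); try congruence; lia.
Qed.


Section Basis.
Variables (a : zpt) (P : idx -> zpt).
Hypothesis Ea : emptyT a.
Hypothesis HP : forall j, cand a j (P j).

Definition ev := zsub (P I1) (P I0).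
Definition fv := zsub (P I2) (P I0).
Definition Dd := (zc I0 ev * zc I1 fv - zc I1 ev * zc I0 fv)%Z.

Lemma cand_facts :
  zc I0 (P I0) = zc I0 a /\ (zc I1 (P I0) > zc I1 a)%Z /\ (zc I2 (P I0) > zc I2 a)%Z /\
  (zc I0 (P I1) > zc I0 a)%Z /\ zc I1 (P I1) = zc I1 a /\ (zc I2 (P I1) > zc I2 a)%Z /\
  (zc I0 (P I2) > zc I0 a)%Z /\ (zc I1 (P I2) > zc I1 a)%Z /\ zc I2 (P I2) = zc I2 a /\
  (zc I0 (P I0) + zc I1 (P I0) + zc I2 (P I0) = 0)%Z /\
  (zc I0 (P I1) + zc I1 (P I1) + zc I2 (P I1) = 0)%Z /\
  (zc I0 (P I2) + zc I1 (P I2) + zc I2 (P I2) = 0)%Z.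
Proof.
  destruct (HP I0) as [L0 [E0 H0]]; destruct (HP I1) as [L1' [E1 H1]]; destruct (HP I2) as [L2' [E2 H2]].
  pose proof (L_A2 _ L0) as S0; pose proof (L_A2 _ L1') as S1; pose proof (L_A2 _ L2') as S2.
  unfold inA2 in *.
  repeat split; first [ assumption | apply H0; discriminate | apply H1; discriminate | apply H2; discriminate ].
Qed.

Lemma Dd_pos : (Dd > 0)%Z.
Proof.
  pose proof cand_facts as F. unfold Dd, ev, fv. rewrite !zc_sub.
  destruct (P I0) as [[x0 x1] x2]. destruct (P I1) as [[y0 y1] y2]. destruct (P I2) as [[w0 w1] w2].
  destruct a as [[a0 a1] a2]. simpl in *. unfold zc0, zc1, zc2 in *; simpl in *.
  destruct F as [F1 [F2 [F3 [F4 [F5 [F6 [F7 [F8 [F9 [S0 [S1 S2]]]]]]]]]]].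
  set (s := (x1 - a1)%Z). set (t := (x2 - a2)%Z). set (u := (y0 - x0)%Z). set (v := (w0 - x0)%Z).
  replace x1 with (a1 + s)%Z by (unfold s; lia).
  replace x2 with (a2 + t)%Z by (unfold t; lia).
  replace y0 with (x0 + u)%Z by (unfold u; lia).
  replace w0 with (x0 + v)%Z by (unfold v; lia).
  assert (0 < u < s + t)%Z by (unfold u, s, t; lia).
  assert (0 < v < s + t)%Z by (unfold v, s, t; lia).
  assert (0 < s)%Z by (unfold s; lia). assert (0 < t)%Z by (unfold t; lia).
  replace y1 with a1 by lia. replace w1 with (- x0 - v - a2)%Z by lia.
  replace a1 with (- x0 - a2 - s - t)%Z by lia.
  destruct (Z_le_gt_dec v t); nia.
Qed.

Lemma inside_contra : forall w sg ta, L w ->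
  (forall i, (Dd * (zc i w - zc i (P I0)) = sg * zc i ev + ta * zc i fv)%Z) ->
  (sg >= 0)%Z -> (ta >= 0)%Z -> (sg + ta <= Dd)%Z -> (sg > 0 \/ ta > 0)%Z ->
  (sg + ta < Dd \/ (sg > 0 /\ ta > 0))%Z -> False.
Proof.
  intros w sg ta Lw Hw H1 H2 H3 H4 H5.
  destruct (Ea w Lw) as [i Hi].
  pose proof Dd_pos as HD. pose proof cand_facts as F.
  specialize (Hw i). unfold ev, fv in Hw. rewrite !zc_sub in Hw.
  destruct F as [F1 [F2 [F3 [F4 [F5 [F6 [F7 [F8 [F9 _]]]]]]]]].
  destruct i; simpl in *.
  - assert (Dd * (zc I0 w - zc I0 a) > 0)%Z by nia. nia.
  - assert (Dd * (zc I1 w - zc I1 a) > 0)%Z by nia. nia.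
  - assert (Dd * (zc I2 w - zc I2 a) > 0)%Z by nia. nia.
Qed.

Definition zlc (m n : Z) : zpt := zadd (P I0) (zadd (zscale m ev) (zscale n fv)).

Lemma F1 : forall q, L q -> exists m n, q = zlc m n.
Proof.
  intros q Lq.
  pose proof Dd_pos as HD.
  pose proof cand_facts as F.
  destruct F as [F1 [F2 [F3 [F4 [F5 [F6 [F7 [F8 [F9 [S0 [S1 S2]]]]]]]]]]].
  assert (Sq := L_A2 _ Lq). unfold inA2 in Sq. change (zc I0 q + zc I1 q + zc I2 q = 0)%Z in Sq.
  set (z0 := (zc I0 q - zc I0 (P I0))%Z). set (z1 := (zc I1 q - zc I1 (P I0))%Z).
  set (e0 := zc I0 ev). set (e1 := zc I1 ev). set (f0 := zc I0 fv). set (f1 := zc I1 fv).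
  set (N1 := (z0 * f1 - z1 * f0)%Z). set (N2 := (e0 * z1 - e1 * z0)%Z).
  assert (Cr : forall i, (Dd * (zc i q - zc i (P I0)) = N1 * zc i ev + N2 * zc i fv)%Z).
  { intros i. unfold N1, N2, z0, z1, e0, e1, f0, f1, Dd, ev, fv in *. rewrite !zc_sub.
    destruct i; simpl.
    - ring.
    - ring.
    - assert (zc I2 q = - zc I0 q - zc I1 q)%Z by lia.
      assert (zc I2 (P I0) = - zc I0 (P I0) - zc I1 (P I0))%Z by lia.
      assert (zc I2 (P I1) = - zc I0 (P I1) - zc I1 (P I1))%Z by lia.
      assert (zc I2 (P I2) = - zc I0 (P I2) - zc I1 (P I2))%Z by lia.
      simpl in *. rewrite H, H0, H1, H2. ring. }
  set (m := (N1 / Dd)%Z). set (s := (N1 mod Dd)%Z).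
  set (n := (N2 / Dd)%Z). set (t := (N2 mod Dd)%Z).
  assert (Em : N1 = (Dd * m + s)%Z) by (apply Z.div_mod; lia).
  assert (En : N2 = (Dd * n + t)%Z) by (apply Z.div_mod; lia).
  assert (Hs : (0 <= s < Dd)%Z) by (apply Z.mod_pos_bound; lia).
  assert (Ht : (0 <= t < Dd)%Z) by (apply Z.mod_pos_bound; lia).
  set (q' := zsub q (zadd (zscale m ev) (zscale n fv))).
  assert (Lev : L ev) by (apply L_sub; apply HP).
  assert (Lfv : L fv) by (apply L_sub; apply HP).
  assert (Lsc : forall k v, L v -> L (zscale k v)).
  { intros k v Lv. assert (forall k : nat, L (zscale (Z.of_nat k) v)).
    { induction k0.
      - replace (zscale (Z.of_nat 0) v) with zzero; [apply L_zero; auto|].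
        apply zpt_ext; intro i; rewrite zc_scale, zc_zero; lia.
      - replace (zscale (Z.of_nat (S k0)) v) with (zadd v (zscale (Z.of_nat k0) v)).
        + apply L_add; auto.
        + apply zpt_ext; intro i; rewrite zc_add, !zc_scale; lia. }
    destruct (Z_le_gt_dec 0 k).
    - replace k with (Z.of_nat (Z.to_nat k)) by lia. auto.
    - replace (zscale k v) with (zopp (zscale (Z.of_nat (Z.to_nat (- k))) v)).
      + apply L_opp; auto.
      + apply zpt_ext; intro i; rewrite zc_opp, !zc_scale; lia. }
  assert (Lq' : L q') by (apply L_sub; auto; apply L_add; auto).
  assert (Cq' : forall i, (Dd * (zc i q' - zc i (P I0)) = s * zc i ev + t * zc i fv)%Z).
  { intro i. specialize (Cr i). unfold q'. rewrite zc_sub, zc_add, !zc_scale. nia. }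
  assert (st0 : s = 0%Z /\ t = 0%Z).
  { destruct (Z_le_gt_dec (s + t) Dd).
    - destruct (Z.eq_dec s 0); destruct (Z.eq_dec t 0); try (split; assumption);
      exfalso; apply (inside_contra q' s t Lq' Cq'); lia.
    - exfalso.
      set (w := zsub (zadd (P I1) (P I2)) q').
      assert (Lw : L w).
      { apply L_sub; auto. apply L_add; apply HP. }
      apply (inside_contra w (Dd - s) (Dd - t) Lw); try lia.
      intro i. specialize (Cq' i). unfold w. unfold ev, fv in *. rewrite !zc_sub, zc_add in *.
      nia. }
  exists m, n. apply zpt_ext. intro i. specialize (Cr i).
  destruct st0 as [-> ->]. unfold zlc. rewrite !zc_add, !zc_scale.
  rewrite Em, En in Cr. 
  assert (Dd * (zc i q - zc i (P I0) - (m * zc i ev + n * zc i fv)) = 0)%Z by nia.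
  apply Z.mul_eq_0 in H as [H|H]; lia.
Qed.

End Basis.
End Lat.

Open Scope R_scope.

Definition sumI (f : idx -> R) : R := f I0 + f I1 + f I2.

Section Plane.
Variables (m n : idx -> Z).
Definition detmn : Z :=
  ((m I1 - m I0) * (n I2 - n I0) - (n I1 - n I0) * (m I2 - m I0))%Z.
Hypothesis Hdet : detmn <> 0%Z.
Definition SepT (l1 l2 : Z) : Prop :=
  exists c al be ga : Z, (al <> 0 \/ be <> 0)%Z /\
    (c + al * l1 + be * l2 >= ga)%Z /\ (c + al * (l1 + 1) + be * l2 >= ga)%Z /\
    (c + al * l1 + be * (l2 + 1) >= ga)%Z /\
    forall j, (c + al * m j + be * n j <= ga)%Z.
Hypothesis Hsep : forall l1 l2, SepT l1 l2.

Lemma keyK : forall (l1 l2 : Z) (u v : R) (lam : idx -> R),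
  0 <= u -> 0 <= v -> u + v <= 1 ->
  (forall i, 0 < lam i) -> sumI lam = 1 ->
  IZR l1 + u = sumI (fun i => lam i * IZR (m i)) ->
  IZR l2 + v = sumI (fun i => lam i * IZR (n i)) -> False.
Proof.
  intros l1 l2 u v lam Hu Hv Huv Hl Hs Hm Hn.
  destruct (Hsep l1 l2) as [c [al [be [ga [Hab [T0 [T1 [T2 HQ]]]]]]]].
  assert (Hstr : exists j, (c + al * m j + be * n j < ga)%Z).
  { apply NNPP; intro Hno.
    assert (Hall : forall j, (c + al * m j + be * n j = ga)%Z).
    { intro j. specialize (HQ j). destruct (Z.eq_dec (c + al * m j + be * n j) ga); auto.
      exfalso; apply Hno; exists j; lia. }
    pose proof (Hall I0); pose proof (Hall I1); pose proof (Hall I2).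
    unfold detmn in Hdet.
    assert (E1 : (al * (m I1 - m I0) + be * (n I1 - n I0) = 0)%Z) by lia.
    assert (E2 : (al * (m I2 - m I0) + be * (n I2 - n I0) = 0)%Z) by lia.
    assert (al * detmn = 0)%Z.
    { unfold detmn. 
      assert (X1 : ((al * (m I1 - m I0) + be * (n I1 - n I0)) * (n I2 - n I0) = 0)%Z) by (rewrite E1; ring).
      assert (X2 : ((al * (m I2 - m I0) + be * (n I2 - n I0)) * (n I1 - n I0) = 0)%Z) by (rewrite E2; ring).
      nia. }
    assert (be * detmn = 0)%Z.
    { unfold detmn. 
      assert (X1 : ((al * (m I1 - m I0) + be * (n I1 - n I0)) * (m I2 - m I0) = 0)%Z) by (rewrite E1; ring).
      assert (X2 : ((al * (m I2 - m I0) + be * (n I2 - n I0)) * (m I1 - m I0) = 0)%Z) by (rewrite E2; ring).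
      nia. }
    apply Z.mul_eq_0 in H2; apply Z.mul_eq_0 in H3. unfold detmn in *. lia. }
  destruct Hstr as [j Hj].
  set (Psi := fun x y => IZR c + IZR al * x + IZR be * y).
  assert (A1 : Psi (IZR l1 + u) (IZR l2 + v) >= IZR ga).
  { unfold Psi.
    apply Z.ge_le in T0; apply Z.ge_le in T1; apply Z.ge_le in T2.
    apply IZR_le in T0; apply IZR_le in T1; apply IZR_le in T2.
    repeat rewrite ?plus_IZR, ?mult_IZR in T0, T1, T2.
    rewrite (plus_IZR l1 1) in T1. rewrite (plus_IZR l2 1) in T2.
    assert (0 <= (1 - u - v) * (IZR c + IZR al * IZR l1 + IZR be * IZR l2 - IZR ga)) by (apply Rmult_le_pos; lra).
    assert (0 <= u * (IZR c + IZR al * (IZR l1 + 1) + IZR be * IZR l2 - IZR ga)) by (apply Rmult_le_pos; lra).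
    assert (0 <= v * (IZR c + IZR al * IZR l1 + IZR be * (IZR l2 + 1) - IZR ga)) by (apply Rmult_le_pos; lra).
    nra. }
  assert (A2 : Psi (IZR l1 + u) (IZR l2 + v) < IZR ga).
  { unfold Psi. rewrite Hm, Hn. unfold sumI in *.
    assert (G : forall i, IZR c + IZR al * IZR (m i) + IZR be * IZR (n i) <= IZR ga).
    { intro i. specialize (HQ i). apply IZR_le in HQ. rewrite !plus_IZR, !mult_IZR in HQ. lra. }
    assert (Gj : IZR c + IZR al * IZR (m j) + IZR be * IZR (n j) < IZR ga).
    { apply IZR_lt in Hj. rewrite !plus_IZR, !mult_IZR in Hj. lra. }
    pose proof (G I0); pose proof (G I1); pose proof (G I2).
    pose proof (Hl I0); pose proof (Hl I1); pose proof (Hl I2).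
    assert (IZR c = (lam I0 + lam I1 + lam I2) * IZR c) by (rewrite Hs; ring).
    destruct j; nra. }
  lra.
Qed.

Lemma tstar : forall c1 c2 c3 d1 d2 d3 : R, 0 < c1 -> 0 < c2 -> 0 < c3 ->
  (c1 + d1 < 0 \/ c2 + d2 < 0 \/ c3 + d3 < 0) ->
  exists t, 0 < t < 1 /\ c1 + t * d1 >= 0 /\ c2 + t * d2 >= 0 /\ c3 + t * d3 >= 0 /\
    (c1 + t * d1 = 0 \/ c2 + t * d2 = 0 \/ c3 + t * d3 = 0).
Proof.
  intros c1 c2 c3 d1 d2 d3 H1 H2 H3 Hv.
  set (r := fun c d => if Rlt_dec d 0 then c / (- d) else 2).
  assert (Rpos : forall c d, 0 < c -> 0 < r c d).
  { intros c d Hc; unfold r; destruct (Rlt_dec d 0). apply Rdiv_lt_0_compat; lra. lra. }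
  assert (Rok : forall c d t, 0 < c -> 0 <= t -> t <= r c d -> c + t * d >= 0).
  { intros c d t Hc Ht Htr; unfold r in Htr; destruct (Rlt_dec d 0).
    - apply Rle_ge. assert (t * (- d) <= c / (- d) * (- d)) by (apply Rmult_le_compat_r; lra).
      field_simplify in H; lra.
    - nra. }
  assert (Rlt1 : forall c d, 0 < c -> c + d < 0 -> r c d < 1).
  { intros c d Hc Hcd; unfold r; destruct (Rlt_dec d 0); [|lra].
    apply (Rmult_lt_reg_r (- d)); [lra|]. field_simplify; lra. }
  assert (Req : forall c d, r c d < 2 -> c + r c d * d = 0).
  { intros c d H; unfold r in *; destruct (Rlt_dec d 0); [|lra]. field; lra. }
  set (t := Rmin (r c1 d1) (Rmin (r c2 d2) (r c3 d3))).
  assert (tle1 : t <= r c1 d1) by apply Rmin_l.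
  assert (tle2 : t <= r c2 d2) by (eapply Rle_trans; [apply Rmin_r | apply Rmin_l]).
  assert (tle3 : t <= r c3 d3) by (eapply Rle_trans; [apply Rmin_r | apply Rmin_r]).
  assert (tpos : 0 < t).
  { unfold t. apply Rmin_pos; [apply Rpos; lra | apply Rmin_pos; apply Rpos; lra]. }
  assert (tlt1 : t < 1).
  { destruct Hv as [Hv|[Hv|Hv]].
    - pose proof (Rlt1 _ _ H1 Hv); lra.
    - pose proof (Rlt1 _ _ H2 Hv); lra.
    - pose proof (Rlt1 _ _ H3 Hv); lra. }
  exists t. repeat split; try lra; try (apply Rok; lra).
  unfold t in *. 
  destruct (Rle_dec (r c1 d1) (Rmin (r c2 d2) (r c3 d3))).
  - rewrite Rmin_left in * by lra. left; apply Req; lra.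
  - rewrite Rmin_right in * by lra.
    destruct (Rle_dec (r c2 d2) (r c3 d3)).
    + rewrite Rmin_left in * by lra. right; left; apply Req; lra.
    + rewrite Rmin_right in * by lra. right; right; apply Req; lra.
Qed.


Lemma up_fl : forall x : R, IZR (up x - 1) <= x < IZR (up x - 1) + 1.
Proof.
  intro x. destruct (archimed x) as [H1 H2]. rewrite minus_IZR. simpl. lra.
Qed.

Lemma plane_main : exists l1 l2 : Z, forall j,
  (m j = l1 + 1 /\ n j = l2)%Z \/ (m j = l1 /\ n j = l2 + 1)%Z \/ (m j = l1 + 1 /\ n j = l2 + 1)%Z.
Proof.
  set (muG := (IZR (m I0) + IZR (m I1) + IZR (m I2)) / 3).
  set (nuG := (IZR (n I0) + IZR (n I1) + IZR (n I2)) / 3).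
  set (fl1 := (up muG - 1)%Z). set (fl2 := (up nuG - 1)%Z).
  destruct (up_fl muG) as [Hf1 Hf1']. destruct (up_fl nuG) as [Hf2 Hf2'].
  fold fl1 in Hf1, Hf1'. fold fl2 in Hf2, Hf2'.
  set (u := muG - IZR fl1). set (v := nuG - IZR fl2).
  assert (Huv : u + v > 1).
  { destruct (Rle_dec (u + v) 1) as [Hle|Hgt]; [|lra]. exfalso.
    apply (keyK fl1 fl2 u v (fun _ => 1/3));
    first [ intros _; lra | unfold u, v; lra | unfold sumI; lra | unfold sumI, u, v, muG, nuG; lra ]. }
  exists fl1, fl2. intro j.
  assert (HAB : (m j - fl1 <= 1 /\ n j - fl2 <= 1 /\ m j - fl1 + (n j - fl2) >= 1)%Z).
  { apply NNPP; intro Hno.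
    set (A := IZR (m j - fl1)). set (B := IZR (n j - fl2)).
    assert (Hviol : (u + v - 1) + ((A - u) + (B - v)) < 0 \/ (1 - u) + (- (A - u)) < 0 \/
                    (1 - v) + (- (B - v)) < 0).
    { assert (Z3 : (m j - fl1 + (n j - fl2) <= 0 \/ m j - fl1 >= 2 \/ n j - fl2 >= 2)%Z) by lia.
      unfold A, B. destruct Z3 as [Z3|[Z3|Z3]].
      - left. apply IZR_le in Z3. rewrite plus_IZR in Z3. lra.
      - right; left. apply Z.ge_le in Z3. apply IZR_le in Z3. lra.
      - right; right. apply Z.ge_le in Z3. apply IZR_le in Z3. lra. }
    destruct (tstar (u + v - 1) (1 - u) (1 - v) ((A - u) + (B - v)) (- (A - u)) (- (B - v)))
      as [t [Ht [G1 [G2 [G3 Gz]]]]]; try (unfold u, v in *; lra); try exact Hviol.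
    set (lam := fun i => (1 - t) / 3 + (if idx_eq_dec i j then t else 0)).
    assert (Hlam : forall i, 0 < lam i).
    { intro i. unfold lam. destruct (idx_eq_dec i j); lra. }
    assert (Hs : sumI lam = 1).
    { unfold sumI, lam. destruct j; simpl; lra. }
    assert (HA : A = IZR (m j) - IZR fl1) by (unfold A; apply minus_IZR).
    assert (HB : B = IZR (n j) - IZR fl2) by (unfold B; apply minus_IZR).
    assert (Sm : sumI (fun i => lam i * IZR (m i)) = (1 - t) * muG + t * IZR (m j)).
    { unfold sumI, lam, muG. destruct j; simpl; lra. }
    assert (Sn : sumI (fun i => lam i * IZR (n i)) = (1 - t) * nuG + t * IZR (n j)).
    { unfold sumI, lam, nuG. destruct j; simpl; lra. }
    set (U := u + t * (A - u)). set (V := v + t * (B - v)).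
    assert (U <= 1) by (unfold U; nra).
    assert (V <= 1) by (unfold V; nra).
    assert (U + V >= 1) by (unfold U, V; nra).
    assert (SmU : sumI (fun i => lam i * IZR (m i)) = IZR fl1 + U) by (rewrite Sm; unfold U, u; nra).
    assert (SnV : sumI (fun i => lam i * IZR (n i)) = IZR fl2 + V) by (rewrite Sn; unfold V, v; nra).
    destruct Gz as [Z1|[Z2|Z3]].
    - assert (U + V = 1) by (unfold U, V; nra).
      apply (keyK fl1 fl2 U V lam); auto; lra.
    - assert (U = 1) by (unfold U; nra).
      apply (keyK (fl1 + 1) fl2 0 V lam); auto; try lra; rewrite ?plus_IZR; lra.
    - assert (V = 1) by (unfold V; nra).
      apply (keyK fl1 (fl2 + 1) U 0 lam); auto; try lra; rewrite ?plus_IZR; lra. }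
  lia.
Qed.

End Plane.

Close Scope R_scope.

Section G.
Variable L : zpt -> Prop.
Hypothesis HL : is_sublattice_A2 L.

Lemma L_scale : forall k v, L v -> L (zscale k v).
Proof.
  intros k v Lv. assert (forall k : nat, L (zscale (Z.of_nat k) v)).
  { induction k0.
    - replace (zscale (Z.of_nat 0) v) with zzero; [apply L_zero; auto|].
      apply zpt_ext; intro i; rewrite zc_scale, zc_zero; lia.
    - replace (zscale (Z.of_nat (S k0)) v) with (zadd v (zscale (Z.of_nat k0) v)).
      + apply L_add; auto.
      + apply zpt_ext; intro i; rewrite zc_add, !zc_scale; lia. }
  destruct (Z_le_gt_dec 0 k).
  - replace k with (Z.of_nat (Z.to_nat k)) by lia. auto.
  - replace (zscale k v) with (zopp (zscale (Z.of_nat (Z.to_nat (- k))) v)).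
    + apply L_opp; auto.
    + apply zpt_ext; intro i; rewrite zc_opp, !zc_scale; lia.
Qed.

Lemma emptyT_tr : forall a l, emptyT L a -> L l -> emptyT L (zadd a l).
Proof.
  intros a l Ea Ll q Lq. destruct (Ea (zsub q l)) as [i Hi].
  - apply L_sub; auto.
  - exists i. rewrite zc_sub in Hi. rewrite zc_add. lia.
Qed.

Lemma cand_tr : forall a j p l, cand L a j p -> L l -> cand L (zadd a l) j (zadd p l).
Proof.
  intros a j p l [Lp [H1 H2]] Ll. split; [apply L_add; auto|split].
  - rewrite !zc_add; lia.
  - intros k Hk; specialize (H2 k Hk); rewrite !zc_add; lia.
Qed.

Lemma canon_tr : forall a j p l, canon L a j p -> L l -> canon L (zadd a l) j (zadd p l).
Proof.
  intros a j p l [Cp Hmin] Ll. split; [apply cand_tr; auto|].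
  intros p' Cp'.
  assert (C2 : cand L a j (zsub p' l)).
  { destruct Cp' as [Lp' [H1 H2]]. split; [apply L_sub; auto|split].
    - rewrite zc_sub; rewrite zc_add in H1; lia.
    - intros k Hk; specialize (H2 k Hk); rewrite zc_sub; rewrite zc_add in H2; lia. }
  specialize (Hmin _ C2). rewrite zc_sub in Hmin. rewrite zc_add. lia.
Qed.

Lemma lin_add : forall psi x y, lin psi (zadd x y) = (lin psi x + lin psi y)%Z.
Proof. intros; unfold lin; rewrite !zc_add; ring. Qed.
Lemma lin_scale : forall psi k x, lin psi (zscale k x) = (k * lin psi x)%Z.
Proof. intros; unfold lin; rewrite !zc_scale; ring. Qed.

Definition tri3 (P : idx -> zpt) (l : zpt) (X : zpt) : Prop :=
  X = zadd (P I1) l \/ X = zadd (P I2) l \/ X = zadd (zsub (zadd (P I1) (P I2)) (P I0)) l.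

Section GG.
Variables (a b : zpt) (P Q : idx -> zpt).
Hypothesis Ea : emptyT L a.
Hypothesis Eb : emptyT L b.
Hypothesis HP : forall j, canon L a j (P j).
Hypothesis HQ : forall j, canon L b j (Q j).
Hypothesis Hno : forall l, L l -> b <> zadd a l.

Lemma HPc : forall j, cand L a j (P j). Proof. intro; apply HP. Qed.
Lemma HQc : forall j, cand L b j (Q j). Proof. intro; apply HQ. Qed.

Lemma G_main : exists l, L l /\ forall j, tri3 P l (Q j).
Proof.
  assert (Fq : forall j, exists m n, Q j = zlc P m n).
  { intro j. apply (F1 L HL a P Ea HPc). apply HQc. }
  destruct (Fq I0) as [m0 [n0 E0]]. destruct (Fq I1) as [m1 [n1 E1]].
  destruct (Fq I2) as [m2 [n2 E2]].
  set (m := fun j => match j with I0 => m0 | I1 => m1 | I2 => m2 end).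
  set (n := fun j => match j with I0 => n0 | I1 => n1 | I2 => n2 end).
  assert (EQ : forall j, Q j = zlc P (m j) (n j)) by (intros []; assumption).
  pose proof (Dd_pos L HL a P Ea HPc) as DP.
  pose proof (Dd_pos L HL b Q Eb HQc) as DQ.
  assert (Lev : L (ev P)) by (unfold ev; apply L_sub; auto; apply HPc).
  assert (Lfv : L (fv P)) by (unfold fv; apply L_sub; auto; apply HPc).
  assert (SE := L_A2 L HL _ Lev). assert (SF := L_A2 L HL _ Lfv).
  unfold inA2 in SE, SF.
  assert (Hdet : detmn m n <> 0%Z).
  { intro Hd.
    assert (EvQ : forall i, zc i (ev Q) = ((m1 - m0) * zc i (ev P) + (n1 - n0) * zc i (fv P))%Z).
    { intro i. unfold ev at 1. rewrite zc_sub, E1, E0. unfold zlc. rewrite !zc_add, !zc_scale. ring. }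
    assert (FvQ : forall i, zc i (fv Q) = ((m2 - m0) * zc i (ev P) + (n2 - n0) * zc i (fv P))%Z).
    { intro i. unfold fv at 1. rewrite zc_sub, E2, E0. unfold zlc. rewrite !zc_add, !zc_scale. ring. }
    assert (Dd Q = detmn m n * Dd P)%Z.
    { unfold Dd at 1. rewrite !EvQ, !FvQ. unfold detmn, Dd. simpl. ring. }
    rewrite Hd in H. lia. }
  assert (Hsep : forall l1 l2, SepT m n l1 l2).
  { intros l1 l2.
    set (l := zadd (zscale l1 (ev P)) (zscale l2 (fv P))).
    assert (Ll : L l) by (apply (L_add L HL); apply L_scale; auto).
    destruct (P3_full L HL (zadd a l) b (fun j => zadd (P j) l) Q) as [psi [ga [Hnd Hs]]].
    - apply emptyT_tr; auto.
    - auto.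
    - intro j; apply canon_tr; auto.
    - auto.
    - intro E; apply (Hno l Ll); symmetry; exact E.
    - exists (lin psi (P I0)), (lin psi (ev P)), (lin psi (fv P)), ga.
      assert (P1e : P I1 = zadd (P I0) (ev P)).
      { apply zpt_ext; intro i; unfold ev; rewrite zc_add, zc_sub; lia. }
      assert (P2e : P I2 = zadd (P I0) (fv P)).
      { apply zpt_ext; intro i; unfold fv; rewrite zc_add, zc_sub; lia. }
      split; [|split; [|split; [|split]]].
      + destruct (Z.eq_dec (lin psi (ev P)) 0) as [H1|H1]; [|left; exact H1].
        destruct (Z.eq_dec (lin psi (fv P)) 0) as [H2|H2]; [|right; exact H2].
        exfalso. destruct Hnd as [i [i' Hii]].
        unfold lin in H1, H2.
        set (e0 := zc I0 (ev P)) in *. set (e1 := zc I1 (ev P)) in *.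
        set (f0 := zc I0 (fv P)) in *. set (f1 := zc I1 (fv P)) in *.
        assert (zc I2 (ev P) = - e0 - e1)%Z by (unfold e0, e1; simpl in *; lia).
        assert (zc I2 (fv P) = - f0 - f1)%Z by (unfold f0, f1; simpl in *; lia).
        rewrite H in H1. rewrite H0 in H2.
        assert (DPd : Dd P = (e0 * f1 - e1 * f0)%Z) by reflexivity.
        set (p0 := zc I0 psi) in *. set (p1 := zc I1 psi) in *. set (p2 := zc I2 psi) in *.
        assert (((p0 - p2) * Dd P) = 0)%Z.
        { rewrite DPd.
          replace ((p0 - p2) * (e0 * f1 - e1 * f0))%Z with
            (f1 * (p0 * e0 + p1 * e1 + p2 * (- e0 - e1)) - e1 * (p0 * f0 + p1 * f1 + p2 * (- f0 - f1)))%Z by ring.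
          rewrite H1, H2; ring. }
        assert (((p1 - p2) * Dd P) = 0)%Z.
        { rewrite DPd.
          replace ((p1 - p2) * (e0 * f1 - e1 * f0))%Z with
            (e0 * (p0 * f0 + p1 * f1 + p2 * (- f0 - f1)) - f0 * (p0 * e0 + p1 * e1 + p2 * (- e0 - e1)))%Z by ring.
          rewrite H1, H2; ring. }
        apply Z.mul_eq_0 in H3; apply Z.mul_eq_0 in H4.
        destruct i, i'; unfold p0, p1, p2 in *; simpl in *; lia.
      + specialize (Hs I0) as [Hs _]. unfold l in Hs. rewrite !lin_add, !lin_scale in Hs. lia.
      + specialize (Hs I1) as [Hs _]. unfold l in Hs. rewrite P1e in Hs.
        rewrite !lin_add, !lin_scale in Hs. lia.
      + specialize (Hs I2) as [Hs _]. unfold l in Hs. rewrite P2e in Hs.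
        rewrite !lin_add, !lin_scale in Hs. lia.
      + intro j. specialize (Hs j) as [_ Hs]. rewrite EQ in Hs. unfold zlc in Hs.
        rewrite !lin_add, !lin_scale in Hs. lia. }
  destruct (plane_main m n Hdet Hsep) as [l1 [l2 Hpl]].
  set (l := zadd (zscale l1 (ev P)) (zscale l2 (fv P))).
  exists l. split; [apply (L_add L HL); apply L_scale; auto|].
  intro j. rewrite EQ. unfold tri3.
  destruct (Hpl j) as [[A B]|[[A B]|[A B]]]; rewrite A, B.
  - left. apply zpt_ext; intro i. unfold zlc, l, ev. repeat rewrite ?zc_add, ?zc_scale, ?zc_sub. ring.
  - right; left. apply zpt_ext; intro i. unfold zlc, l, fv. repeat rewrite ?zc_add, ?zc_scale, ?zc_sub. ring.
  - right; right. apply zpt_ext; intro i. unfold zlc, l, ev, fv. repeat rewrite ?zc_add, ?zc_scale, ?zc_sub. ring.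
Qed.

End GG.
End G.

Definition in3 (X Y Z W : zpt) := W = X \/ W = Y \/ W = Z.

Lemma surj3 : forall X Y Z (R : idx -> zpt),
  (forall j k, j <> k -> R j <> R k) -> (forall j, in3 X Y Z (R j)) ->
  forall W, in3 X Y Z W -> exists k, R k = W.
Proof.
  intros X Y Z R Hinj HR W HW.
  assert (N01 : R I0 <> R I1) by (apply Hinj; discriminate).
  assert (N02 : R I0 <> R I2) by (apply Hinj; discriminate).
  assert (N12 : R I1 <> R I2) by (apply Hinj; discriminate).
  unfold in3 in *.
  destruct (HR I0) as [E0|[E0|E0]]; destruct (HR I1) as [E1|[E1|E1]];
  destruct (HR I2) as [E2|[E2|E2]]; destruct HW as [EW|[EW|EW]];
  subst W;
  first [ exists I0; congruence | exists I1; congruence | exists I2; congruence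
        | exfalso; congruence ].
Qed.

Lemma label_unique : forall X Y Z (R1 R2 : idx -> zpt),
  (forall j, in3 X Y Z (R1 j)) -> (forall j, in3 X Y Z (R2 j)) ->
  (forall j k, k <> j -> (zc j (R1 j) < zc j (R1 k))%Z) ->
  (forall j k, k <> j -> (zc j (R2 j) < zc j (R2 k))%Z) ->
  forall j, R1 j = R2 j.
Proof.
  intros X Y Z R1 R2 H1 H2 S1 S2 j.
  assert (I1' : forall j k, j <> k -> R1 j <> R1 k).
  { intros j0 k Hjk E. specialize (S1 j0 k (not_eq_sym Hjk)). rewrite E in S1. lia. }
  assert (I2' : forall j k, j <> k -> R2 j <> R2 k).
  { intros j0 k Hjk E. specialize (S2 j0 k (not_eq_sym Hjk)). rewrite E in S2. lia. }
  destruct (surj3 X Y Z R1 I1' H1 (R2 j) (H2 j)) as [k Hk].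
  destruct (idx_eq_dec k j) as [->|Hkj]; [exact Hk|].
  destruct (surj3 X Y Z R2 I2' H2 (R1 j) (H1 j)) as [k' Hk'].
  destruct (idx_eq_dec k' j) as [->|Hk'j]; [symmetry; exact Hk'|].
  exfalso. pose proof (S1 j k Hkj). pose proof (S2 j k' Hk'j).
  rewrite Hk in H. rewrite Hk' in H0. lia.
Qed.

Section T3.
Variable L : zpt -> Prop.
Hypothesis HL : is_sublattice_A2 L.

Lemma cand_strict : forall b Q, (forall j, cand L b j (Q j)) ->
  forall j k, k <> j -> (zc j (Q j) < zc j (Q k))%Z.
Proof.
  intros b Q HQ j k Hkj. destruct (HQ j) as [_ [E _]]. destruct (HQ k) as [_ [_ H]].
  specialize (H j (not_eq_sym Hkj)). lia.
Qed.

Lemma three_int : forall a P b Q c R,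
  emptyT L a -> emptyT L b -> emptyT L c ->
  (forall j, canon L a j (P j)) -> (forall j, canon L b j (Q j)) -> (forall j, canon L c j (R j)) ->
  (forall l, L l -> b <> zadd a l) -> (forall l, L l -> c <> zadd a l) ->
  exists l, L l /\ c = zadd b l.
Proof.
  intros a P b Q c R Ea Eb Ec HP HQ HR Nb Nc.
  destruct (G_main L HL a b P Q Ea Eb HP HQ Nb) as [l1 [Ll1 T1]].
  destruct (G_main L HL a c P R Ea Ec HP HR Nc) as [l2 [Ll2 T2]].
  set (d := zsub l1 l2).
  set (R' := fun j => zadd (R j) d).
  set (X := zadd (P I1) l1). set (Y := zadd (P I2) l1).
  set (Z := zadd (zsub (zadd (P I1) (P I2)) (P I0)) l1).
  assert (HQc : forall j, cand L b j (Q j)) by (intro; apply HQ).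
  assert (HRc : forall j, cand L c j (R j)) by (intro; apply HR).
  assert (E : forall j, Q j = R' j).
  { apply (label_unique X Y Z).
    - intro j. exact (T1 j).
    - intro j. unfold R'. destruct (T2 j) as [E|[E|E]]; rewrite E; unfold in3, X, Y, Z, d;
      [left|right;left|right;right]; apply zpt_ext; intro i; repeat rewrite ?zc_add, ?zc_sub; ring.
    - apply (cand_strict b Q HQc).
    - intros j k Hkj. unfold R'. rewrite !zc_add. pose proof (cand_strict c R HRc j k Hkj). lia. }
  exists (zsub l2 l1). split; [apply (L_sub L HL); auto|].
  apply zpt_ext; intro j.
  destruct (HQc j) as [_ [Eb' _]]. destruct (HRc j) as [_ [Ec' _]].
  specialize (E j). unfold R', d in E.
  assert (zc j (Q j) = zc j (zadd (R j) (zsub l1 l2))) by (rewrite E; reflexivity).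
  repeat rewrite ?zc_add, ?zc_sub in *. lia.
Qed.

Lemma canon_exists : forall a j, (exists p, cand L a j p) -> exists p, canon L a j p.
Proof.
  intros a j [p0 Hp0].
  set (Pn := fun k : nat => exists p, cand L a j p /\ Z.to_nat (zc (nxt j) p - zc (nxt j) a) = k).
  destruct (Wf_nat.dec_inh_nat_subset_has_unique_least_element Pn) as [k0 [[[p [Cp Ek]] Hmin] _]].
  - intro k. apply classic.
  - exists (Z.to_nat (zc (nxt j) p0 - zc (nxt j) a)). exists p0. auto.
  - exists p. split; auto. intros p' Cp'.
    assert (Hp'pos : (zc (nxt j) p' > zc (nxt j) a)%Z).
    { destruct Cp' as [_ [_ H]]. apply H. destruct j; discriminate. }
    assert (Hppos : (zc (nxt j) p > zc (nxt j) a)%Z).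
    { destruct Cp as [_ [_ H]]. apply H. destruct j; discriminate. }
    specialize (Hmin (Z.to_nat (zc (nxt j) p' - zc (nxt j) a))).
    assert (k0 <= Z.to_nat (zc (nxt j) p' - zc (nxt j) a))%nat by (apply Hmin; exists p'; auto).
    lia.
Qed.

End T3.

Open Scope R_scope.

Definition cr (i : idx) (x : pt) : R :=
  match i with I0 => c0 x | I1 => c1 x | I2 => c2 x end.

Lemma pt_ext : forall x y : pt, (forall i, cr i x = cr i y) -> x = y.
Proof.
  intros [[x0 x1] x2] [[y0 y1] y2] H.
  pose proof (H I0) as H0; pose proof (H I1) as H1; pose proof (H I2) as H2.
  simpl in *; unfold c0, c1, c2 in *; simpl in *; subst; reflexivity.
Qed.

Lemma cr_z : forall i p, cr i (zpt_to_pt p) = IZR (zc i p).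
Proof. intros [] [[? ?] ?]; reflexivity. Qed.

Definition mkp (f : idx -> R) : pt := (f I0, f I1, f I2).
Lemma cr_mkp : forall f i, cr i (mkp f) = f i.
Proof. intros f []; reflexivity. Qed.

Lemma cr_padd : forall i x y, cr i (padd x y) = cr i x + cr i y.
Proof. intros [] [[? ?] ?] [[? ?] ?]; reflexivity. Qed.
Lemma cr_popp : forall i x, cr i (popp x) = - cr i x.
Proof. intros [] [[? ?] ?]; reflexivity. Qed.
Lemma cr_psub : forall i x y, cr i (psub x y) = cr i x - cr i y.
Proof. intros [] [[? ?] ?] [[? ?] ?]; reflexivity. Qed.

Lemma d_tri_ge : forall x p v, v <= d_tri x p <-> exists i, v <= cr i x - cr i p.
Proof.
  intros x p v. unfold d_tri. rewrite Rmax_Rle, Rmax_Rle. split.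
  - intros [H|[H|H]]; [exists I0|exists I1|exists I2]; exact H.
  - intros [[] H]; simpl in H; tauto.
Qed.

Lemma d_tri_le : forall x p v, d_tri x p <= v <-> forall i, cr i x - cr i p <= v.
Proof.
  intros x p v. unfold d_tri. split.
  - intros H i. assert (H0 := Rmax_l (c0 x - c0 p) (Rmax (c1 x - c1 p) (c2 x - c2 p))).
    assert (H1 := Rmax_l (c1 x - c1 p) (c2 x - c2 p)).
    assert (H2 := Rmax_r (c1 x - c1 p) (c2 x - c2 p)).
    assert (H3 := Rmax_r (c0 x - c0 p) (Rmax (c1 x - c1 p) (c2 x - c2 p))).
    destruct i; simpl; lra.
  - intros H. apply Rmax_lub; [apply (H I0)|apply Rmax_lub; [apply (H I1)|apply (H I2)]].
Qed.

Lemma inH0_sum : forall x, inH0 x <-> cr I0 x + cr I1 x + cr I2 x = 0.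
Proof. intros x; unfold inH0; simpl; tauto. Qed.

Lemma gap1 : forall z : R, exists d, d > 0 /\ forall k : Z, IZR k < z -> z - IZR k >= d.
Proof.
  intro z. destruct (archimed z) as [H1 H2].
  destruct (Rlt_dec (IZR (up z) - 1) z) as [Hl|Hl].
  - exists (z - (IZR (up z) - 1)). split; [lra|].
    intros k Hk. assert (IZR k < IZR (up z)) by lra. apply lt_IZR in H.
    assert (k <= up z - 1)%Z by lia. apply IZR_le in H0. rewrite minus_IZR in H0. simpl in H0. lra.
  - exists 1. split; [lra|].
    intros k Hk. assert (Ez : z = IZR (up z - 1)) by (rewrite minus_IZR; simpl; lra).
    rewrite Ez in Hk. apply lt_IZR in Hk. assert (k <= up z - 2)%Z by lia.
    apply IZR_le in H. rewrite minus_IZR in H. rewrite Ez, minus_IZR. simpl in *. lra.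
Qed.

Definition center (a : zpt) : pt :=
  mkp (fun i => IZR (zc i a) - IZR (zc I0 a + zc I1 a + zc I2 a) / 3).

Definition valid (L : zpt -> Prop) (a : zpt) : Prop :=
  emptyT L a /\ forall j, exists p, cand L a j p.

Section A.
Variable L : zpt -> Prop.
Hypothesis HL : is_sublattice_A2 L.

Lemma crit_step : forall x vx eps pst,
  L pst -> d_tri x (zpt_to_pt pst) = vx ->
  (forall p, L p -> vx <= d_tri x (zpt_to_pt p)) ->
  eps > 0 ->
  (forall y, inH0 y ->
      Rabs (c0 y - c0 x) < eps -> Rabs (c1 y - c1 x) < eps -> Rabs (c2 y - c2 x) < eps ->
      forall vy, is_hval L y vy -> vy <= vx) ->
  inH0 x ->
  forall j, exists p, L p /\ cr j x - IZR (zc j p) = vx /\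
     forall k, k <> j -> cr k x - IZR (zc k p) < vx.
Proof.
  intros x vx eps pst Lpst Dpst Hlow Heps Hloc HH0 j.
  apply NNPP; intro Hn.
  destruct (gap1 (cr I0 x - vx)) as [d0 [Hd0 G0]].
  destruct (gap1 (cr I1 x - vx)) as [d1 [Hd1 G1]].
  destruct (gap1 (cr I2 x - vx)) as [d2 [Hd2 G2]].
  set (de := Rmin d0 (Rmin d1 d2)).
  assert (Hde : de > 0) by (unfold de; apply Rmin_pos; [lra|apply Rmin_pos; lra]).
  assert (Gap : forall i (k : Z), cr i x - IZR k > vx -> cr i x - IZR k >= vx + de).
  { intros i k Hk.
    assert (de <= d0) by apply Rmin_l.
    assert (de <= d1) by (eapply Rle_trans; [apply Rmin_r|apply Rmin_l]).
    assert (de <= d2) by (eapply Rle_trans; [apply Rmin_r|apply Rmin_r]).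
    destruct i.
    - specialize (G0 k ltac:(lra)). lra.
    - specialize (G1 k ltac:(lra)). lra.
    - specialize (G2 k ltac:(lra)). lra. }
  set (ep := Rmin (de / 3) (eps / 3)).
  assert (Hep : ep > 0) by (unfold ep; apply Rmin_pos; lra).
  assert (Hep1 : ep <= de / 3) by apply Rmin_l.
  assert (Hep2 : ep <= eps / 3) by apply Rmin_r.
  set (w := fun i => if idx_eq_dec i j then -2 else 1).
  set (y := mkp (fun i => cr i x + ep * w i)).
  assert (Cy : forall i, cr i y = cr i x + ep * w i) by (intro i; unfold y; apply cr_mkp).
  assert (Hw : forall i, w i <= 1) by (intro i; unfold w; destruct idx_eq_dec; lra).
  assert (Hw2 : forall i, -2 <= w i) by (intro i; unfold w; destruct idx_eq_dec; lra).
  assert (Hwj : w j = -2) by (unfold w; destruct idx_eq_dec; [lra|congruence]).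
  assert (Hwk : forall k, k <> j -> w k = 1) by (intros k Hk; unfold w; destruct idx_eq_dec; [congruence|lra]).
  assert (Hy : inH0 y).
  { apply inH0_sum. rewrite !Cy. apply inH0_sum in HH0. unfold w.
    unfold inH0 in HH0; destruct j; simpl in *; lra. }
  assert (Hclose : forall i, Rabs (cr i y - cr i x) < eps).
  { intro i. rewrite Cy. replace (cr i x + ep * w i - cr i x) with (ep * w i) by ring.
    specialize (Hw i); specialize (Hw2 i). apply Rabs_def1; nra. }
  assert (Lower : forall q, L q -> vx + ep <= d_tri y (zpt_to_pt q)).
  { intros q Lq. apply d_tri_ge.
    destruct (classic (exists i, cr i x - IZR (zc i q) > vx)) as [[i Hi]|Hno].
    - exists i. rewrite Cy, cr_z. specialize (Gap i _ Hi). specialize (Hw2 i). nra.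
    - assert (Hall : forall i, cr i x - IZR (zc i q) <= vx).
      { intro i. apply Rnot_gt_le. intro; apply Hno; exists i; auto. }
      destruct (classic (exists k, k <> j /\ cr k x - IZR (zc k q) = vx)) as [[k [Hk Ek]]|Hno2].
      + exists k. rewrite Cy, cr_z, Hwk by auto. lra.
      + exfalso. apply Hn. exists q. split; auto.
        pose proof (Hlow q Lq) as Hq. apply d_tri_ge in Hq. destruct Hq as [i Hi].
        rewrite cr_z in Hi. 
        destruct (idx_eq_dec i j) as [->|Hij].
        * split. { specialize (Hall j). lra. }
          intros k Hk. specialize (Hall k).
          destruct (Rle_lt_or_eq_dec _ _ Hall) as [Hlt|Heq]; auto.
          exfalso; apply Hno2; exists k; auto.
        * exfalso; apply Hno2; exists i; split; auto. specialize (Hall i). 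
          lra. }
  assert (Hv : is_hval L y (vx + ep)).
  { split.
    - exists pst. split; auto. apply Rle_antisym.
      + apply d_tri_le. intro i. rewrite Cy, cr_z.
        assert (cr i x - IZR (zc i pst) <= vx).
        { rewrite <- cr_z. rewrite <- Dpst. generalize i. apply d_tri_le. apply Rle_refl. }
        specialize (Hw i). nra.
      + apply Lower; auto.
    - exact Lower. }
  specialize (Hloc y Hy (Hclose I0) (Hclose I1) (Hclose I2) _ Hv). lra.
Qed.

End A.

Section B.
Variable L : zpt -> Prop.
Hypothesis HL : is_sublattice_A2 L.

Lemma crit_valid : forall x, inCrit L x -> exists a, valid L a /\ x = center a.
Proof.
  intros x [HH0 [vx [[[pst [Lpst Dpst]] Hlow] [eps [Heps Hloc]]]]].
  pose proof (crit_step L x vx eps pst Lpst Dpst Hlow Heps Hloc HH0) as St.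
  destruct (St I0) as [p0 H0]. destruct (St I1) as [p1 H1]. destruct (St I2) as [p2 H2].
  set (P := fun j => match j with I0 => p0 | I1 => p1 | I2 => p2 end).
  assert (HP : forall j, L (P j) /\ cr j x - IZR (zc j (P j)) = vx /\
     forall k, k <> j -> cr k x - IZR (zc k (P j)) < vx) by (intros []; assumption).
  set (a := mkz (fun j => zc j (P j))).
  assert (Cx : forall i, cr i x = IZR (zc i a) + vx).
  { intro i. unfold a. rewrite zc_mkz. destruct (HP i) as [_ [E _]]. lra. }
  assert (Hvx : vx = - IZR (zc I0 a + zc I1 a + zc I2 a) / 3).
  { pose proof (proj1 (inH0_sum x) HH0) as S0. rewrite !Cx in S0. rewrite !plus_IZR. lra. }
  exists a. split; [split|].
  - intros q Lq. pose proof (Hlow q Lq) as Hq. apply d_tri_ge in Hq. destruct Hq as [i Hi].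
    exists i. rewrite cr_z, Cx in Hi. apply le_IZR. lra.
  - intro j. exists (P j). destruct (HP j) as [Lp [E S]]. split; [auto|split].
    + unfold a; rewrite zc_mkz; reflexivity.
    + intros k Hk. specialize (S k Hk). rewrite Cx in S. apply Z.lt_gt. apply lt_IZR. lra.
  - apply pt_ext. intro i. unfold center. rewrite cr_mkp, Cx, Hvx. lra.
Qed.

Lemma d_tri_shift : forall x l p,
  d_tri (padd x (zpt_to_pt l)) (zpt_to_pt p) = d_tri x (zpt_to_pt (zsub p l)).
Proof.
  intros x l p. apply Rle_antisym.
  - apply d_tri_le. intro i. 
    assert (H := proj1 (d_tri_le x (zpt_to_pt (zsub p l)) _) (Rle_refl _) i).
    rewrite cr_padd, !cr_z in *. rewrite zc_sub, minus_IZR in H. lra.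
  - apply d_tri_le. intro i.
    assert (H := proj1 (d_tri_le (padd x (zpt_to_pt l)) (zpt_to_pt p) _) (Rle_refl _) i).
    rewrite cr_padd, !cr_z in *. rewrite zc_sub, minus_IZR. lra.
Qed.

Lemma hval_shift : forall x l v, L l -> is_hval L x v -> is_hval L (padd x (zpt_to_pt l)) v.
Proof.
  intros x l v Ll [[p [Lp Dp]] Hlow]. split.
  - exists (zadd p l). split; [apply (L_add L HL); auto|].
    rewrite d_tri_shift. replace (zsub (zadd p l) l) with p; auto.
    apply zpt_ext; intro i; rewrite zc_sub, zc_add; lia.
  - intros q Lq. rewrite d_tri_shift. apply Hlow. apply (L_sub L HL); auto.
Qed.

Lemma padd_shift_back : forall x l,
  padd (padd x (zpt_to_pt l)) (zpt_to_pt (zopp l)) = x.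
Proof. intros x l. apply pt_ext; intro i. rewrite !cr_padd, !cr_z, zc_opp, opp_IZR. lra. Qed.

Lemma crit_tr : forall x l, L l -> inCrit L x -> inCrit L (padd x (zpt_to_pt l)).
Proof.
  intros x l Ll [HH0 [vx [Hv [eps [Heps Hloc]]]]].
  split.
  - apply inH0_sum. rewrite !cr_padd, !cr_z. pose proof (proj1 (inH0_sum x) HH0) as S0.
    pose proof (L_A2 L HL l Ll) as S. unfold inA2 in S; change (zc I0 l + zc I1 l + zc I2 l = 0)%Z in S.
    assert (IZR (zc I0 l + zc I1 l + zc I2 l) = 0) by (rewrite S; reflexivity).
    rewrite !plus_IZR in H. lra.
  - exists vx. split; [apply hval_shift; auto|].
    exists eps. split; auto.
    intros y Hy A0 A1 A2 vy Hvy.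
    set (y' := padd y (zpt_to_pt (zopp l))).
    assert (Hvy' : is_hval L y' vy) by (apply hval_shift; auto; apply (L_opp L HL); auto).
    apply (Hloc y'); auto.
    + apply inH0_sum. unfold y'. rewrite !cr_padd, !cr_z, !zc_opp, !opp_IZR. pose proof (proj1 (inH0_sum _) Hy) as Sy.

      pose proof (L_A2 L HL l Ll) as S. unfold inA2 in S; change (zc I0 l + zc I1 l + zc I2 l = 0)%Z in S.
      assert (IZR (zc I0 l + zc I1 l + zc I2 l) = 0) by (rewrite S; reflexivity).
      rewrite !plus_IZR in H. lra.
    + change (Rabs (cr I0 y' - cr I0 x) < eps). unfold y'.
      change (Rabs (cr I0 y - cr I0 (padd x (zpt_to_pt l))) < eps) in A0.
      rewrite !cr_padd, !cr_z, zc_opp, opp_IZR in *.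
      replace (cr I0 y + - IZR (zc I0 l) - cr I0 x) with (cr I0 y - (cr I0 x + IZR (zc I0 l))) by ring. auto.
    + change (Rabs (cr I1 y' - cr I1 x) < eps). unfold y'.
      change (Rabs (cr I1 y - cr I1 (padd x (zpt_to_pt l))) < eps) in A1.
      rewrite !cr_padd, !cr_z, zc_opp, opp_IZR in *.
      replace (cr I1 y + - IZR (zc I1 l) - cr I1 x) with (cr I1 y - (cr I1 x + IZR (zc I1 l))) by ring. auto.
    + change (Rabs (cr I2 y' - cr I2 x) < eps). unfold y'.
      change (Rabs (cr I2 y - cr I2 (padd x (zpt_to_pt l))) < eps) in A2.
      rewrite !cr_padd, !cr_z, zc_opp, opp_IZR in *.
      replace (cr I2 y + - IZR (zc I2 l) - cr I2 x) with (cr I2 y - (cr I2 x + IZR (zc I2 l))) by ring. auto.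
Qed.

End B.

Section M.
Variable L : zpt -> Prop.
Hypothesis HL : is_sublattice_A2 L.

Lemma center_add : forall a l, L l -> center (zadd a l) = padd (center a) (zpt_to_pt l).
Proof.
  intros a l Ll. pose proof (L_A2 L HL l Ll) as S. unfold inA2 in S.
  change (zc I0 l + zc I1 l + zc I2 l = 0)%Z in S.
  apply pt_ext; intro i. unfold center. rewrite cr_padd, !cr_mkp, cr_z, !zc_add.
  assert (IZR (zc I0 l + zc I1 l + zc I2 l) = 0) by (rewrite S; reflexivity).
  rewrite !plus_IZR in *. lra.
Qed.

Definition same (y x : pt) : Prop := exists l, L l /\ y = padd x (zpt_to_pt l).

Lemma valid_canon : forall a, valid L a -> exists P : idx -> zpt, forall j, canon L a j (P j).
Proof.
  intros a [_ Hc].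
  destruct (canon_exists L a I0 (Hc I0)) as [p0 H0].
  destruct (canon_exists L a I1 (Hc I1)) as [p1 H1].
  destruct (canon_exists L a I2 (Hc I2)) as [p2 H2].
  exists (fun j => match j with I0 => p0 | I1 => p1 | I2 => p2 end). intros []; assumption.
Qed.

Lemma three_crit : forall x y z, inCrit L x -> inCrit L y -> inCrit L z ->
  ~ same y x -> ~ same z x -> same z y.
Proof.
  intros x y z Cx Cy Cz Nyx Nzx.
  destruct (crit_valid L x Cx) as [a [Va Ex]].
  destruct (crit_valid L y Cy) as [b [Vb Ey]].
  destruct (crit_valid L z Cz) as [c [Vc Ez]].
  destruct (valid_canon a Va) as [P HP].
  destruct (valid_canon b Vb) as [Q HQ].
  destruct (valid_canon c Vc) as [R HR].
  destruct (three_int L HL a P b Q c R (proj1 Va) (proj1 Vb) (proj1 Vc) HP HQ HR) as [l [Ll El]].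
  - intros l Ll E. apply Nyx. exists l. split; auto. rewrite Ey, Ex, E. apply center_add; auto.
  - intros l Ll E. apply Nzx. exists l. split; auto. rewrite Ez, Ex, E. apply center_add; auto.
  - exists l. split; auto. rewrite Ez, Ey, El. apply center_add; auto.
Qed.

End M.

Theorem mainTheorem18 :
  forall L : zpt -> Prop,
    is_sublattice_A2 L -> has_rank2 L -> reflection_invariant L.
Proof.
  intros L HL _.
  assert (Tr : forall x l, L l -> inCrit L x -> inCrit L (padd x (zpt_to_pt l))) by (intros; apply crit_tr; auto).
  assert (Lopp : forall l, L l -> L (zopp l)) by (apply (L_opp L HL)).
  destruct (classic (exists x, inCrit L x)) as [[x0 Cx0]|Hno].
  2:{ exists (0, 0, 0). intro x. split; intro H; exfalso; apply Hno; eauto. }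
  destruct (classic (exists y, inCrit L y /\ ~ same L y x0)) as [[y0 [Cy0 Ny0]]|Hall].
  - exists (popp (padd x0 y0)). intro w.
    assert (Eq1 : forall l, psub w (popp (padd x0 y0)) = padd x0 (zpt_to_pt l) ->
              popp w = padd y0 (zpt_to_pt (zopp l))).
    { intros l E. apply pt_ext; intro i. assert (cr i (psub w (popp (padd x0 y0))) = cr i (padd x0 (zpt_to_pt l))) by (rewrite E; auto).
      rewrite cr_psub, !cr_popp, !cr_padd, !cr_z, zc_opp, opp_IZR in *. lra. }
    assert (Eq2 : forall l, psub w (popp (padd x0 y0)) = padd y0 (zpt_to_pt l) ->
              popp w = padd x0 (zpt_to_pt (zopp l))).
    { intros l E. apply pt_ext; intro i. assert (cr i (psub w (popp (padd x0 y0))) = cr i (padd y0 (zpt_to_pt l))) by (rewrite E; auto).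
      rewrite cr_psub, !cr_popp, !cr_padd, !cr_z, zc_opp, opp_IZR in *. lra. }
    assert (Eq3 : forall l, popp w = padd x0 (zpt_to_pt l) ->
              psub w (popp (padd x0 y0)) = padd y0 (zpt_to_pt (zopp l))).
    { intros l E. apply pt_ext; intro i. assert (cr i (popp w) = cr i (padd x0 (zpt_to_pt l))) by (rewrite E; auto).
      rewrite cr_psub, !cr_popp, !cr_padd, !cr_z, zc_opp, opp_IZR in *. lra. }
    assert (Eq4 : forall l, popp w = padd y0 (zpt_to_pt l) ->
              psub w (popp (padd x0 y0)) = padd x0 (zpt_to_pt (zopp l))).
    { intros l E. apply pt_ext; intro i. assert (cr i (popp w) = cr i (padd y0 (zpt_to_pt l))) by (rewrite E; auto).
      rewrite cr_psub, !cr_popp, !cr_padd, !cr_z, zc_opp, opp_IZR in *. lra. }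
    split; intro Cw.
    + destruct (classic (same L (popp w) x0)) as [[l [Ll E]]|N].
      * rewrite (Eq3 l E). apply Tr; auto.
      * destruct (three_crit L HL x0 y0 (popp w) Cx0 Cy0 Cw Ny0 N) as [l [Ll E]].
        rewrite (Eq4 l E). apply Tr; auto.
    + destruct (classic (same L (psub w (popp (padd x0 y0))) x0)) as [[l [Ll E]]|N].
      * rewrite (Eq1 l E). apply Tr; auto.
      * destruct (three_crit L HL x0 y0 _ Cx0 Cy0 Cw Ny0 N) as [l [Ll E]].
        rewrite (Eq2 l E). apply Tr; auto.
  - assert (Sm : forall y, inCrit L y -> same L y x0).
    { intros y Cy. apply NNPP; intro N. apply Hall; eauto. }
    exists (popp (padd x0 x0)). intro w. split; intro Cw.
    + destruct (Sm _ Cw) as [l [Ll E]].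
      replace (psub w (popp (padd x0 x0))) with (padd x0 (zpt_to_pt (zopp l))).
      * apply Tr; auto.
      * apply pt_ext; intro i. assert (cr i (popp w) = cr i (padd x0 (zpt_to_pt l))) by (rewrite E; auto).
        rewrite cr_psub, !cr_popp, !cr_padd, !cr_z, zc_opp, opp_IZR in *. lra.
    + destruct (Sm _ Cw) as [l [Ll E]].
      replace (popp w) with (padd x0 (zpt_to_pt (zopp l))).
      * apply Tr; auto.
      * apply pt_ext; intro i. assert (cr i (psub w (popp (padd x0 x0))) = cr i (padd x0 (zpt_to_pt l))) by (rewrite E; auto).
        rewrite cr_psub, !cr_popp, !cr_padd, !cr_z, zc_opp, opp_IZR in *. lra.
Qed.
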